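(* Let $D$ be a finite group with $d=|D|\geq2$, and let $\overline{\Gamma}$ be the undirected graph whose vertices are the finitely supported functions $f:\Z\to D$, two vertices being adjacent iff they differ at exactly one point of $\Z$. Let $X$ be a finite subgraph of $\overline{\Gamma}$ with $V\ge1$ vertices. Then $X$ has at most $\frac{d-1}{2}V\log_d(V)$ edges, and equality holds only if $X$ is a $d$-ary hypercube, i.e. there exist a finite set $C\subset\Z$ and a finitely supported $h:\Z\to D$ such that $V(X)=\{g:g(x)=h(x)\ \forall x\notin C\}$ and $X$ contains every edge of $\overline{\Gamma}$ between vertices of $V(X)$.
   Context: A finitely supported function $f:\Z\to D$ is one with $\{x:f(x)\neq\mathrm{Id}_D\}$ finite. *)

(* Defs.v *)
From HB Require Import structures.
From mathcomp Require Import all_boot all_order all_algebra all_fingroup.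
From mathcomp Require Import finmap.
From mathcomp Require Import reals exp.
Set Implicit Arguments. Unset Strict Implicit. Unset Printing Implicit Defensive.
Import Order.TTheory GRing.Theory Num.Theory.

Local Open Scope fset_scope.

Notation fsZ D := {fsfun int -> D with 1%g}.

Definition adjacent (D : finGroupType) (f g : fsZ D) : Prop :=
  exists x : int, f x != g x /\ forall y : int, f y != g y -> y = x.

Definition is_subgraph (D : finGroupType) (VX : {fset fsZ D})
  (EX : {fset {fset fsZ D}}) : Prop :=
  forall e, e \in EX -> exists u v, [/\ u \in VX, v \in VX, adjacent u v
                                      & e = [fset u; v]].

Definition is_hypercube (D : finGroupType) (VX : {fset fsZ D})
  (EX : {fset {fset fsZ D}}) : Prop :=
  exists (C : {fset int}) (h : fsZ D),
    (forall g : fsZ D, g \in VX <-> (forall x : int, x \notin C -> g x = h x)) /\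
    (forall u v, u \in VX -> v \in VX -> adjacent u v -> [fset u; v] \in EX).

(* Main.v *)
Require Import Defs.
From HB Require Import structures.
From mathcomp Require Import all_boot all_order all_algebra all_fingroup.
From mathcomp Require Import finmap.
From mathcomp Require Import reals exp.
From mathcomp Require Import ring lra.
Import Order.TTheory GRing.Theory Num.Theory.

Module Num0.
Local Open Scope ring_scope.

Section Num.
Variable R : realType.

Lemma lnn_ge0 (n : nat) : 0 <= ln (n%:R : R).
Proof.
case: n => [|n]; first by rewrite ln0.
by apply: ln_ge0; rewrite ler1n.
Qed.

Lemma ln2_ge : 1 / 2 <= ln (2 : R).
Proof.
have h := @le_ln1Dx R (- (1/2)) ltac:(lra).
have e : 1 + - (1/2) = (2 : R)^-1 by field.
rewrite e lnV ?posrE // in h; lra.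
Qed.

Lemma ln_gt1 (k : nat) : (4 <= k)%N -> 1 < ln (k.+1%:R : R).
Proof.
move=> hk.
have l4 : ln (4 : R) = ln 2 *+ 2.
  by rewrite -lnXn // expr2; congr ln; rewrite -natrM.
have : ln (4 : R) < ln k.+1%:R.
  by rewrite ltr_ln ?posrE ?ltr0n // ltr_nat ltnS.
have := ln2_ge; rewrite l4 => h1 h2; rewrite mulr2n in h2; lra.
Qed.

Lemma pow_ln (n : nat) (x : R) : 0 < x -> n%:R * ln x = ln (x ^+ n).
Proof. by move=> hx; rewrite lnXn // mulr_natl. Qed.

Lemma ln_step (k : nat) : (2 <= k)%N ->
  (k.-1)%:R * ln (k.+1%:R) < k%:R * ln (k%:R) :> R.
Proof.
move=> hk.
case: k hk => [|[|[|[|k]]]] // _.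
- rewrite !pow_ln // ltr_ln ?posrE ?exprn_gt0 //= -!natrX ltr_nat //.
- rewrite !pow_ln // ltr_ln ?posrE ?exprn_gt0 //= -!natrX ltr_nat //.
set m := k.+4.
have hm : (0 : R) < m%:R by rewrite ltr0n.
have e : (m.+1%:R : R) = m%:R * (1 + m%:R^-1).
  by rewrite mulrDr mulr1 mulfV ?gt_eqF // -natr1.
have h1 : ln (m.+1%:R : R) <= ln m%:R + m%:R^-1.
  rewrite e lnM ?posrE //; last by rewrite ltr_pwDr ?invr_gt0.
  rewrite lerD2l le_ln1Dx //.
  have : 0 <= (m%:R : R)^-1 by rewrite invr_ge0 ltW.
  move=> ?; lra.
have h2 : 1 < ln (m.+1%:R : R) by apply: ln_gt1.
have h3 : m%:R * ln (m.+1%:R : R) <= m%:R * ln m%:R + 1.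
  by have := ler_wpM2l (ltW hm) h1; rewrite mulrDr mulfV ?gt_eqF.
have em : (m.-1%:R : R) = m%:R - 1 by rewrite -subn1 natrB.
rewrite em mulrBl mul1r; lra.
Qed.

Lemma ln_chain (c n : nat) : (2 <= c)%N -> (c < n)%N ->
  (c.-1)%:R * ln (n%:R) < (n.-1)%:R * ln (c%:R) :> R.
Proof.
move=> hc; elim: n => [//|n IH] hn.
case: (ltngtP c n) => [lt|gt|eq].
- have h1 := IH lt.
  have hn2 : (2 <= n)%N by apply: leq_trans hc (ltnW lt).
  have h2 := ln_step n hn2.
  have cpos : (0 : R) < c.-1%:R by rewrite ltr0n; case: (c) hc => [|[]].
  have npos : (0 : R) < n.-1%:R by rewrite ltr0n; case: (n) hn2 => [|[]].
  have npos' : (0 : R) < n%:R by rewrite ltr0n; case: (n) hn2 => [|[]].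
  have a1 := ltr_pM2l cpos; have a2 := ltr_pM2l npos'.
  rewrite -a1 in h2; rewrite -a2 in h1.
  rewrite -(ltr_pM2l npos) /=.
  have -> : (n.-1%:R * (c.-1%:R * ln n.+1%:R) : R) = c.-1%:R * (n.-1%:R * ln n.+1%:R) by ring.
  apply: lt_trans h2 _.
  have -> : (c.-1%:R * (n%:R * ln n%:R) : R) = n%:R * (c.-1%:R * ln n%:R) by ring.
  apply: lt_le_trans h1 _.
  rewrite le_eqVlt; apply/orP; left; apply/eqP; ring.
- by rewrite ltnS leqNgt gt in hn.
- by rewrite -eq /=; apply: ln_step.
Qed.

Lemma ln_key (c d : nat) : (1 <= c)%N -> (c <= d)%N ->
  (c.-1)%:R * ln (d%:R) <= (d.-1)%:R * ln (c%:R) :> R /\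
  ((c.-1)%:R * ln (d%:R) = (d.-1)%:R * ln (c%:R) :> R -> c = 1%N \/ c = d).
Proof.
move=> h1 h2.
case: c h1 h2 => [//|[|c]] _ h2.
  by rewrite /= ln1 mul0r mulr0; split => //; left.
case: (ltngtP c.+2 d) h2 => [lt|//|<-] _; last by split => //; right.
have := @ln_chain c.+2 d isT lt => h.
by split; [apply: ltW | move=> e; rewrite e ltxx in h].
Qed.

End Num.

End Num0.
Import Num0.

Module Fin1.
Set Implicit Arguments. Unset Strict Implicit. Unset Printing Implicit Defensive.

Section Fin.
Variables (I D : finType).
Notation T := {ffun I -> D}.

Definition agree (i : I) (u v : T) := [forall k, (k != i) ==> (u k == v k)].
Definition fadj (u v : T) := [exists j, (u j != v j) && agree j u v].
Definition Ec (S : {set T}) : nat := \sum_(u in S) \sum_(v in S) (fadj u v : nat).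
Definition line (S : {set T}) i u := [set v in S | agree i u v].
Definition cls (S : {set T}) i (a : D) := [set v in S | v i == a].
Definition comb i (w z : T) : T := [ffun k => if k == i then z i else w k].

Lemma sum_bool (A : {set T}) (b : pred T) :
  \sum_(v in A) (b v : nat) = #|[set v in A | b v]|.
Proof.
rewrite -sum1_card [RHS]big_mkcond /= big_mkcond /=.
by apply: eq_bigr => v _; rewrite !inE; case: (v \in A); case: (b v).
Qed.

Lemma agree_refl i u : agree i u u.
Proof. by apply/forallP => k; rewrite eqxx implybT. Qed.

Lemma agree_sym i u v : agree i u v = agree i v u.
Proof.
by rewrite /agree; apply/idP/idP => /forallP h; apply/forallP => k; move: (h k); case: (k != i) => //= /eqP ->.
Qed.

Lemma agree_eq i u v : agree i u v -> u i = v i -> u = v.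
Proof.
move=> /forallP h e; apply/ffunP => k.
case: (eqVneq k i) => [->//|ne]; by apply/eqP; move: (h k); rewrite ne.
Qed.

Lemma fadj_cross i u v :
  (fadj u v && (u i != v i)) = (agree i u v && (v != u)).
Proof.
apply/andP/andP => [[/existsP [j /andP [nj aj]] ni]|[a ne]].
  case: (eqVneq j i) => [ej|nji].
    subst j; split => //; apply: contra ni => /eqP e; by rewrite e.
  by move/forallP: aj => /(_ i); rewrite eq_sym nji (negbTE ni).
have ni : u i != v i.
  by apply/negP => /eqP e; move: ne; rewrite (agree_eq a e) eqxx.
by split => //; apply/existsP; exists i; rewrite ni.
Qed.

Lemma comb_agree i w z : agree i (comb i w z) w.
Proof. by apply/forallP => k; rewrite ffunE; case: (k == i) => //=; rewrite implybT. Qed.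

Lemma comb_i i w z : comb i w z i = z i.
Proof. by rewrite ffunE eqxx. Qed.

Lemma comb_char i (w z u : T) : (agree i u w && (z i == u i)) = (u == comb i w z).
Proof.
apply/andP/eqP => [[a /eqP e]|->]; last by rewrite comb_agree comb_i eqxx.
apply: (@agree_eq i); last by rewrite comb_i e.
rewrite agree_sym; apply/forallP => k; apply/implyP => nk.
move/forallP: a => /(_ k); by rewrite nk ffunE (negbTE nk) /= eq_sym.
Qed.


Lemma line_mem (S : {set T}) i (u : T) : u \in S -> u \in line S i u.
Proof. by move=> uS; rewrite inE uS agree_refl. Qed.

Lemma Ec_split (S : {set T}) (i : I) : Ec S =
  \sum_(a : D) Ec (cls S i a) + \sum_(u in S) (#|line S i u| - 1).
Proof.
rewrite /Ec.
have e1 u v : (fadj u v : nat) =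
    (fadj u v && (u i == v i)) + (fadj u v && (u i != v i)).
  by case: fadj; case: eqP.
rewrite (eq_bigr (fun u => \sum_(v in S) ((fadj u v && (u i == v i)) : nat)
   + \sum_(v in S) ((fadj u v && (u i != v i)) : nat))); last first.
  by move=> u _; rewrite -big_split; apply: eq_bigr => v _; apply: e1.
rewrite big_split; congr (_ + _).
  rewrite (@partition_big _ _ _ _ _ _ (fun u => u \in S) (fun u : T => u i) predT) //=.
  apply: eq_bigr => a _.
  rewrite [RHS](eq_bigl (fun u => (u \in S) && (u i == a))); last first.
    by move=> u; rewrite inE.
  apply: eq_bigr => u /andP [_ /eqP ua].
  rewrite [RHS]big_mkcond [LHS]big_mkcond /=; apply: eq_bigr => v _.
  rewrite !inE ua [a == _]eq_sym; case: (v \in S) => //; by case: (v i == a); rewrite ?andbT ?andbF.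
apply: eq_bigr => u uS.
rewrite (eq_bigr (fun v => (agree i u v && (v != u)) : nat)); last first.
  by move=> v _; rewrite fadj_cross.
rewrite sum_bool.
have -> : [set v in S | agree i u v && (v != u)] = line S i u :\ u.
  by apply/setP => v; rewrite !inE; case: (v \in S); case: (v != u);
    rewrite ?andbF ?andbT.
by rewrite (cardsD1 u (line S i u)) line_mem // add1n subn1.
Qed.

Lemma line_card (S : {set T}) i (u : T) : u \in S -> (1 <= #|line S i u| <= #|D|)%N.
Proof.
move=> uS; apply/andP; split.
  by rewrite card_gt0; apply/set0Pn; exists u; apply: line_mem.
rewrite -(@card_in_imset _ _ (fun v : T => v i)); first exact: max_card.
move=> v w; rewrite !inE => /andP [_ av] /andP [_ aw] e.
apply: (@agree_eq i) => //.
apply/forallP => k; apply/implyP => nk.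
move/forallP: av => /(_ k); rewrite nk => /eqP <-.
by move/forallP: aw => /(_ k); rewrite nk.
Qed.

Lemma sum_eq1 (S : {set T}) (c : T) : \sum_(u in S) ((u == c) : nat) = (c \in S).
Proof.
case: (boolP (c \in S)) => cS.
  rewrite (bigD1 c) //= eqxx big1 // => u /andP [_ /negbTE ->] //.
by rewrite big1 // => u uS; case: eqP => // e; rewrite -e uS in cS.
Qed.

Lemma prod_count (S : {set T}) (i : I) :
  \sum_(u in S) (#|line S i u| * #|cls S i (u i)|)%N =
  \sum_(w in S) \sum_(z in S) ((comb i w z \in S) : nat).
Proof.
have e u : (#|line S i u| * #|cls S i (u i)|)%N =
    \sum_(w in S) \sum_(z in S) ((agree i u w && (z i == u i)) : nat).
  rewrite -!sum_bool big_distrl /=; apply: eq_bigr => w _.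
  rewrite big_distrr /=; apply: eq_bigr => z _.
  by case: agree; case: eqP.
rewrite (eq_bigr _ (fun u _ => e u)) exchange_big /=.
apply: eq_bigr => w _; rewrite exchange_big /=; apply: eq_bigr => z _.
rewrite -sum_eq1; apply: eq_bigr => u _.
by rewrite comb_char.
Qed.


Definition cube (S : {set T}) := exists2 h : T, h \in S &
  exists C : {set I}, S = [set g : T | [forall k, (k \notin C) ==> (g k == h k)]].

Lemma line_inj (S : {set T}) i (u : T) : {in line S i u &, injective (fun v : T => v i)}.
Proof.
move=> v w; rewrite !inE => /andP [_ av] /andP [_ aw] e.
apply: (@agree_eq i) => //.
apply/forallP => k; apply/implyP => nk.
move/forallP: av => /(_ k); rewrite nk => /eqP <-.
by move/forallP: aw => /(_ k); rewrite nk.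
Qed.

Lemma cube_build (S : {set T}) i u0 u1 : u0 \in S -> u1 \in S -> u0 i != u1 i ->
  (forall w z, w \in S -> z \in S -> comb i w z \in S) ->
  (forall u, u \in S -> #|line S i u| = 1%N \/ #|line S i u| = #|D|) ->
  cube (cls S i (u0 i)) -> cube S.
Proof.
move=> u0S u1S ne prod lc [h hc [C eC]].
have c2 : (1 < #|line S i u0|)%N.
  apply/card_gt1P; exists u0, (comb i u0 u1); split.
  - exact: line_mem.
  - by rewrite inE prod // agree_sym comb_agree.
  - by apply: contra ne => /eqP e; rewrite e comb_i.
have cD : #|line S i u0| = #|D|.
  by case: (lc u0 u0S) => // e; rewrite e in c2.
have surj a : exists2 v, v \in S & v i = a.
  have : [set (v : T) i | v in line S i u0] = setT.
    apply/eqP; rewrite eqEcard subsetT cardsT card_in_imset ?cD //.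
    by rewrite leqnn. exact: line_inj.
  move/setP => /(_ a); rewrite inE => /imsetP [v]; rewrite inE => /andP [vS _] ->.
  by exists v.
have clsS : forall g, g \in cls S i (u0 i) -> g \in S.
  by move=> g; rewrite inE => /andP [].
exists h; first exact: clsS.
exists (i |: C); apply/setP => g; rewrite inE.
apply/idP/idP => [gS|/forallP H].
  have : comb i g u0 \in cls S i (u0 i) by rewrite inE prod // comb_i eqxx.
  rewrite eC inE => /forallP H; apply/forallP => k; apply/implyP.
  rewrite !inE negb_or => /andP [nki nkC].
  by move: (H k); rewrite nkC /= ffunE (negbTE nki).
have g'c : comb i g h \in cls S i (u0 i).
  rewrite eC inE; apply/forallP => k; apply/implyP => nkC.
  rewrite ffunE; case: (eqVneq k i) => [->//|nki].
  by move: (H k); rewrite !inE negb_or nki nkC.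
have [v vS vi] := surj (g i).
have -> : g = comb i (comb i g h) v.
  apply/ffunP => k; rewrite !ffunE; case: (eqVneq k i) => [->|//].
  by rewrite vi.
exact: prod (clsS _ g'c) vS.
Qed.

End Fin.

End Fin1.
Import Fin1.

Module Fin2.
Set Implicit Arguments. Unset Strict Implicit. Unset Printing Implicit Defensive.
Local Open Scope ring_scope.

Section Gibbs.
Variables (R : realType) (T0 : finType).

Lemma gibbs (S : {set T0}) (p : T0 -> nat) : (0 < #|S|)%N ->
  (forall u, u \in S -> (0 < p u)%N) ->
  (\sum_(u in S) p u <= #|S| ^ 2)%N ->
  \sum_(u in S) ln ((p u)%:R : R) <= #|S|%:R * ln #|S|%:R /\
  (\sum_(u in S) ln ((p u)%:R : R) = #|S|%:R * ln #|S|%:R ->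
     (\sum_(u in S) p u = #|S| ^ 2)%N).
Proof.
move=> N0 pp Sle.
set N : R := #|S|%:R.
have Npos : 0 < N by rewrite ltr0n.
have key : \sum_(u in S) ln ((p u)%:R : R) - N * ln N <=
    (\sum_(u in S) p u)%:R / N - N.
  have e1 : N * ln N = \sum_(u in S) ln N.
    by rewrite sumr_const mulr_natl.
  have e2 : (\sum_(u in S) p u)%:R / N - N = \sum_(u in S) ((p u)%:R / N - 1).
    rewrite sumrB sumr_const natr_sum mulr_suml; congr (_ - _).
  rewrite e1 e2 -sumrB; apply: ler_sum => u uS.
  have pu : (0 : R) < (p u)%:R by rewrite ltr0n pp.
  rewrite -ln_div ?posrE //.
  have : 0 < (p u)%:R / N by rewrite divr_gt0.
  move=> h; have := @le_ln1Dx R ((p u)%:R / N - 1) ltac:(lra).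
  by rewrite addrC subrK.
have Sle' : (\sum_(u in S) p u)%:R / N - N <= 0.
  rewrite subr_le0 ler_pdivrMr // -natrM ler_nat.
  by rewrite mulnn.
split; first by lra.
move=> eq.
rewrite eq subrr in key.
have : (\sum_(u in S) p u)%:R / N - N = 0 by lra.
move/eqP; rewrite subr_eq0 => /eqP /(congr1 (fun x => x * N)).
rewrite mulfVK ?gt_eqF // -natrM => /eqP; rewrite eqr_nat => /eqP ->.
by rewrite mulnn.
Qed.

End Gibbs.

Section Main.
Variables (R : realType) (I D : finType).
Notation T := {ffun I -> D}.

Definition nlog (n : nat) : R := n%:R * ln n%:R.

Lemma nlog01 n : (n <= 1)%N -> nlog n = 0.
Proof. by case: n => [|[|]] //= _; rewrite /nlog ?mul0r // ln1 mulr0. Qed.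

Lemma nlog_ge0 n : 0 <= nlog n.
Proof. by rewrite /nlog mulr_ge0 ?ler0n ?lnn_ge0. Qed.

Lemma fadj_irr (u : T) : fadj u u = false.
Proof. by apply/existsP => [[j]]; rewrite eqxx. Qed.

Lemma small (S : {set T}) : (#|S| <= 1)%N ->
  (Ec S)%:R * ln (#|D|%:R : R) <= (#|D|.-1)%:R * nlog #|S| /\
  ((0 < #|S|)%N -> (Ec S)%:R * ln (#|D|%:R : R) = (#|D|.-1)%:R * nlog #|S| ->
   cube S).
Proof.
move=> h1.
have E0 : Ec S = 0%N.
  rewrite /Ec big1 // => u uS; rewrite big1 // => v vS.
  by move/card_le1_eqP: h1 => /(_ u v uS vS) ->; rewrite fadj_irr.
rewrite E0 nlog01 // mul0r mulr0; split => // S0 _.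
have [h hS] : exists h, h \in S by apply/set0Pn; rewrite -card_gt0.
exists h => //; exists set0; apply/setP => g; rewrite inE.
apply/idP/forallP => [gS k|H].
  by move/card_le1_eqP: h1 => /(_ g h gS hS) ->; rewrite eqxx implybT.
suff -> : g = h by [].
by apply/ffunP => k; move: (H k); rewrite inE /= => /eqP.
Qed.

Lemma sum_nlog (S : {set T}) i :
  \sum_(a : D) nlog #|cls S i a| = \sum_(u in S) ln (#|cls S i (u i)|%:R : R).
Proof.
rewrite (@partition_big _ _ _ _ _ _ (fun u => u \in S) (fun u : T => u i) predT) //=.
apply: eq_bigr => a _.
rewrite (eq_bigr (fun _ => ln (#|cls S i a|%:R : R))); last first.
  by move=> u /andP [_ /eqP ->].
rewrite (eq_bigl (fun u => u \in cls S i a)); last by move=> u; rewrite inE.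
by rewrite sumr_const /nlog mulr_natl.
Qed.

Lemma sum_nat_eqle (J : finType) (P : pred J) (f g : J -> nat) :
  (forall j, P j -> f j <= g j)%N -> \sum_(j | P j) f j = \sum_(j | P j) g j ->
  forall j, P j -> f j = g j.
Proof.
move=> le eq j Pj.
have := @leqif_sum J P (fun j => f j == g j) f g.
move=> /(_ (fun j Pj => leqif_eq (le j Pj))) [_] /esym.
rewrite eq eqxx => /forallP /(_ j); rewrite Pj /= => /eqP.
by [].
Qed.

Lemma sum_real_eqle (J : finType) (P : pred J) (f g : J -> R) :
  (forall j, P j -> f j <= g j) -> \sum_(j | P j) f j = \sum_(j | P j) g j ->
  forall j, P j -> f j = g j.
Proof.
move=> le eq j Pj.
have := @psumr_eq0P R J P (fun j => g j - f j).
move=> /(_ (fun j Pj => ltac:(rewrite subr_ge0; exact: le j Pj))).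
rewrite sumrB eq subrr => /(_ erefl j Pj) /eqP; rewrite subr_eq0 => /eqP.
by [].
Qed.


Theorem fin_main (S : {set T}) : (2 <= #|D|)%N ->
  (Ec S)%:R * ln (#|D|%:R : R) <= (#|D|.-1)%:R * nlog #|S| /\
  ((0 < #|S|)%N -> (Ec S)%:R * ln (#|D|%:R : R) = (#|D|.-1)%:R * nlog #|S| ->
   cube S).
Proof.
move=> hd.
move: {2}#|S| (leqnn #|S|) => n. elim: n S => [|n IH] S hS.
  by apply: small; apply: leq_trans hS _.
case: (leqP #|S| 1) => [h1|h2]; first exact: small.
case/card_gt1P: h2 => u0 [u1 [u0S u1S ne01]].
have : ~~ [forall i, u0 i == u1 i].
  apply: contra ne01 => /forallP H; apply/eqP/ffunP => k; exact/eqP.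
rewrite negb_forall => /existsP [i ni].
have ltc a : (#|cls S i a| <= n)%N.
  rewrite -ltnS; apply: leq_trans hS; apply: proper_card; apply/properP; split.
    by apply/subsetP => v; rewrite inE => /andP [].
  case: (eqVneq (u0 i) a) => [<-|na].
    by exists u1 => //; rewrite inE u1S /= eq_sym.
  by exists u0 => //; rewrite inE u0S /= na.
set L := ln (#|D|%:R : R).
set dm := (#|D|.-1)%:R : R.
set N := #|S|.
set c := fun u => #|line S i u|.
set m := fun u => #|cls S i (u i)|.
have dmpos : 0 < dm by rewrite ltr0n; case: #|D| hd => [|[]].
have cpos u : u \in S -> (0 < c u)%N by move=> uS; case/andP: (line_card i uS).
have mpos u : u \in S -> (0 < m u)%N.
  by move=> uS; rewrite card_gt0; apply/set0Pn; exists u; rewrite inE uS eqxx.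
have hE : (Ec S)%:R * L = \sum_(a : D) (Ec (cls S i a))%:R * L
     + \sum_(u in S) ((c u).-1)%:R * L.
  rewrite (Ec_split S i) natrD mulrDl !natr_sum !mulr_suml; congr (_ + _).
  by apply: eq_bigr => u _; rewrite subn1.
have B1 a : (Ec (cls S i a))%:R * L <= dm * nlog #|cls S i a|.
  by have [] := IH _ (ltc a).
have B2 u : u \in S -> ((c u).-1)%:R * L <= dm * ln (c u)%:R.
  move=> uS; have /andP [c1 c2] := line_card i uS.
  by have [] := @ln_key R _ _ c1 c2.
have sumM : \sum_(u in S) ln ((c u * m u)%N%:R : R) =
    \sum_(u in S) ln ((c u)%:R : R) + \sum_(u in S) ln ((m u)%:R : R).
  rewrite -big_split; apply: eq_bigr => u uS /=.
  by rewrite natrM lnM // posrE ltr0n ?cpos ?mpos.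
have psum : (\sum_(u in S) (c u * m u) <= N ^ 2)%N.
  have e1 : (\sum_(w in S) \sum_(z in S) 1 = N ^ 2)%N.
    by rewrite sum_nat_const sum_nat_const muln1 mulnn.
  rewrite prod_count -e1.
  by apply: leq_sum => w _; apply: leq_sum => z _; apply: leq_b1.
have N0 : (0 < N)%N by rewrite card_gt0; apply/set0Pn; exists u0.
have [G1 G2] := @gibbs R _ S (fun u => c u * m u)%N N0
   (fun u uS => ltac:(by rewrite muln_gt0 cpos ?mpos)) psum.
have SN := sum_nlog S i.
have S1 : \sum_(a : D) (Ec (cls S i a))%:R * L <= \sum_(a : D) dm * nlog #|cls S i a|.
  by apply: ler_sum => a _; apply: B1.
have S2 : \sum_(u in S) ((c u).-1)%:R * L <= \sum_(u in S) dm * ln ((c u)%:R : R).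
  by apply: ler_sum => u uS; apply: B2.
have G1' : dm * \sum_(u in S) ln ((c u * m u)%N%:R : R) <= dm * nlog N.
  by rewrite ler_pM2l.
rewrite -!mulr_sumr in S1 S2.
have ineq : (Ec S)%:R * L <= dm * nlog N.
  rewrite hE; rewrite sumM -SN in G1'; rewrite mulrDr in G1'; lra.
split => // _ eqH.
have G1c := G1'.
rewrite sumM -SN mulrDr in G1'.
have E1 : \sum_(a : D) (Ec (cls S i a))%:R * L = dm * \sum_(a : D) nlog #|cls S i a|.
  lra.
have E2 : \sum_(u in S) ((c u).-1)%:R * L = dm * \sum_(u in S) ln ((c u)%:R : R).
  lra.
have E3 : dm * \sum_(u in S) ln ((c u * m u)%N%:R : R) = dm * nlog N.
  rewrite sumM -SN mulrDr; lra.
have dm0 : dm != 0 by rewrite gt_eqF.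
have E3' := mulfI dm0 E3.
have {G2}G2 := G2 E3'.
rewrite mulr_sumr in E1; rewrite mulr_sumr in E2.
have t1 := @sum_real_eqle D predT (fun a => (Ec (cls S i a))%:R * L)
   (fun a => dm * nlog #|cls S i a|) (fun a _ => B1 a) E1 (u0 i) isT.
have cub : cube (cls S i (u0 i)).
  apply: (proj2 (IH _ (ltc (u0 i)))) => //.
  by rewrite card_gt0; apply/set0Pn; exists u0; rewrite inE u0S eqxx.
have lc u : u \in S -> #|line S i u| = 1%N \/ #|line S i u| = #|D|.
  move=> uS.
  have t2 := @sum_real_eqle _ (fun u => u \in S) (fun u => ((c u).-1)%:R * L)
     (fun u => dm * ln ((c u)%:R : R)) B2 E2 u uS.
  have /andP [c1 c2] := line_card i uS.
  by have [_] := @ln_key R _ _ c1 c2; apply.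
have e1 : (\sum_(w in S) \sum_(z in S) 1 = N ^ 2)%N.
  by rewrite sum_nat_const sum_nat_const muln1 mulnn.
rewrite prod_count -e1 in G2.
have prod w z : w \in S -> z \in S -> comb i w z \in S.
  move=> wS zS.
  have t3 := @sum_nat_eqle _ (fun w => w \in S)
    (fun w => (\sum_(z in S) ((comb i w z \in S) : nat))%N)
    (fun w => (\sum_(z in S) 1)%N)
    (fun w _ => ltac:(by apply: leq_sum => z0 _; apply: leq_b1)) G2 w wS.
  have t4 := @sum_nat_eqle _ (fun z => z \in S)
    (fun z => ((comb i w z \in S) : nat)) (fun z => 1%N)
    (fun z _ => leq_b1 _) t3 z zS.
  by move: t4; case: (comb i w z \in S).
exact: (cube_build u0S u1S ni prod lc cub).
Qed.

End Main.

End Fin2.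
Import Fin2.

Module Trans.
Set Implicit Arguments. Unset Strict Implicit. Unset Printing Implicit Defensive.

Section Trans.
Variables (D : finGroupType) (VX : {fset fsZ D}).
Local Open Scope fset_scope.

Definition KK : {fset int} := \bigcup_(f <- VX) finsupp f.
Definition res (f : fsZ D) : {ffun KK -> D} := [ffun k => f (val k)].
Definition suppK (f : fsZ D) := forall x, x \notin KK -> f x = 1%g.

Lemma VX_supp f : f \in VX -> suppK f.
Proof.
move=> fV x xK; apply: fsfun_dflt; apply: contra xK => xs.
by apply/bigfcupP; exists f => //; rewrite fV.
Qed.

Lemma res_inj f g : suppK f -> suppK g -> res f = res g -> f = g.
Proof.
move=> sf sg e; apply/fsfunP => x.
case: (boolP (x \in KK)) => xK; last by rewrite sf ?sg.
by have := congr1 (fun h : {ffun KK -> D} => h [` xK]) e; rewrite !ffunE.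
Qed.

Lemma adj_res f g : suppK f -> suppK g -> adjacent f g <-> fadj (res f) (res g).
Proof.
move=> sf sg; split.
  move=> [x [nx H]].
  have xK : x \in KK by apply: contraNT nx => xK; rewrite sf ?sg.
  apply/existsP; exists [` xK]; rewrite !ffunE nx /=.
  apply/forallP => k; apply/implyP => nk; rewrite !ffunE.
  apply: contraR nk => nk; apply/eqP/val_inj => /=; exact: H.
move=> /existsP [j /andP [nj /forallP aj]].
exists (val j); rewrite !ffunE in nj; split => // y ny.
have yK : y \in KK by apply: contraNT ny => yK; rewrite sf ?sg.
have := aj [` yK]; rewrite !ffunE /=.
case: (eqVneq [` yK] j) => [<-//|_] /= /eqP e.
by rewrite e eqxx in ny.
Qed.


Definition rk (x : VX) : nat := enum_rank x.
Definition Aj (x y : VX) : bool := fadj (res (val x)) (res (val y)).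
Definition Alt : {set VX * VX} := [set p | Aj p.1 p.2 && (rk p.1 < rk p.2)].
Definition gE (p : VX * VX) : {fset fsZ D} := [fset val p.1; val p.2].
Definition Img := [fset gE p | p in Alt].
Definition Sfin : {set {ffun KK -> D}} := (fun x : VX => res (val x)) @: [set: VX].

Lemma fadj_sym (I T : finType) (u v : {ffun I -> T}) : fadj u v = fadj v u.
Proof.
by apply/existsP/existsP => [] [j /andP [nj aj]]; exists j;
  rewrite eq_sym nj agree_sym.
Qed.

Lemma resV_inj : injective (fun x : VX => res (val x)).
Proof.
move=> x y e; apply: val_inj; apply: res_inj e; apply: VX_supp; exact: valP.
Qed.

Lemma card_Sfin : #|Sfin| = #|` VX|.
Proof. by rewrite card_imset ?cardsT -?cardfE //; exact: resV_inj. Qed.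

Lemma card_Alt_sum : #|Alt| = (\sum_x \sum_y (Aj x y && (rk x < rk y) : nat))%N.
Proof.
rewrite pair_big /= -sum1_card big_mkcond /=; apply: eq_bigr => p _.
by rewrite inE; case: ifP.
Qed.

Lemma Ec_Alt : Ec Sfin = (2 * #|Alt|)%N.
Proof.
rewrite /Ec big_imset /=; last by move=> x y _ _; apply: resV_inj.
rewrite (eq_bigr (fun x => \sum_(y in [set: VX]) (Aj x y : nat))%N); last first.
  by move=> x _; rewrite big_imset //= => y z _ _; apply: resV_inj.
rewrite (eq_bigl (fun _ => true)); last by move=> x; rewrite inE.
rewrite (eq_bigr (fun x => \sum_y ((Aj x y && (rk x < rk y)) +
   (Aj x y && (rk y < rk x))))%N); last first.
  move=> x _; rewrite (eq_bigl (fun _ => true)); last by move=> y; rewrite inE.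
  apply: eq_bigr => y _.
  case: (ltngtP (rk x) (rk y)) => h; rewrite ?andbT ?andbF ?addn0 ?add0n //.
  have e : x = y by apply: enum_rank_inj; apply: val_inj.
  by rewrite e /Aj fadj_irr.
rewrite (eq_bigr (fun x => (\sum_y (Aj x y && (rk x < rk y) : nat) +
   \sum_y (Aj x y && (rk y < rk x) : nat))%N)); last by move=> x _; rewrite big_split.
have ex : (\sum_x \sum_y (Aj x y && (rk y < rk x) : nat) =
    \sum_x \sum_y (Aj x y && (rk x < rk y) : nat))%N.
  rewrite exchange_big; apply: eq_bigr => x _; apply: eq_bigr => y _.
  by rewrite /Aj fadj_sym.
by rewrite big_split ex card_Alt_sum mul2n -addnn.
Qed.

End Trans.

End Trans.
Import Trans.

Module Trans2.
Set Implicit Arguments. Unset Strict Implicit. Unset Printing Implicit Defensive.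

Section Trans2.
Variables (D : finGroupType) (VX : {fset fsZ D}).
Local Open Scope fset_scope.
Local Notation Img := (Img VX).
Local Notation Aj := (@Aj D VX).
Local Notation rk := (@rk D VX).
Local Notation Alt := (Alt VX).
Lemma fset2C (T : choiceType) (a b : T) : [fset a; b] = [fset b; a].
Proof. by rewrite fsetUC. Qed.

Lemma adj_Img u v : u \in VX -> v \in VX -> adjacent u v -> [fset u; v] \in Img.
Proof.
move=> uV vV a.
have A1 : Aj [` uV] [` vV] by apply/adj_res => //; apply: VX_supp.
have A2 : Aj [` vV] [` uV] by rewrite /Trans.Aj fadj_sym.
have nuv : u != v by case: a => x [nx _]; apply: contra nx => /eqP ->.
case: (ltngtP (rk [` uV]) (rk [` vV])) => h.
- apply/imfsetP; exists ([` uV], [` vV]) => //=.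
  by rewrite in_set /= A1 h.
- apply/imfsetP; exists ([` vV], [` uV]); first by rewrite in_set /= A2 h.
  by rewrite /Trans.gE /= fsetUC.
- have e : [` uV] = [` vV] by apply: enum_rank_inj; apply: val_inj.
  by have := congr1 val e => /= E; rewrite E eqxx in nuv.
Qed.

Lemma card_Img : (#|` Img| <= #|Alt|)%N.
Proof.
apply: leq_trans (leq_imfset_card _ _ _) _.
rewrite -(card_uniqP (enum_finmem_uniq _)).
apply: subset_leq_card; apply/subsetP => p.
by rewrite enum_finmemE.
Qed.

Lemma EX_Img (EX : {fset {fset fsZ D}}) : is_subgraph VX EX -> EX `<=` Img.
Proof.
move=> H; apply/fsubsetP => e eE.
by have [u [v [uV vV a ->]]] := H e eE; apply: adj_Img.
Qed.

End Trans2.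

End Trans2.
Import Trans2.

Unset Implicit Arguments. Set Strict Implicit.
Local Open Scope ring_scope.

Theorem mainTheorem6 (R : realType) (D : finGroupType)
  (VX : {fset fsZ D}) (EX : {fset {fset fsZ D}}) :
  (2 <= #|D|)%N -> (1 <= #|` VX|)%N -> is_subgraph VX EX ->
  let d : R := (#|D|%:R)%R in
  let V : R := (#|` VX|%:R)%R in
  ((#|` EX|%:R <= (d - 1) / 2 * V * (ln V / ln d))%R /\
   ((#|` EX|%:R = (d - 1) / 2 * V * (ln V / ln d))%R -> is_hypercube VX EX)).
Proof.
move=> hd hV hsub d V.
have [fin1 fin2] := @fin_main R (KK VX) D (Sfin VX) hd.
rewrite card_Sfin Ec_Alt /nlog in fin1 fin2.
have Lpos : (0 : R) < ln d by apply: ln_gt0; rewrite /d ltr1n.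
have dm : ((#|D|.-1)%:R : R) = d - 1.
  by rewrite -subn1 natrB // ltnW.
rewrite dm -/d -/V natrM in fin1 fin2.
have cE : (#|` EX| <= #|Alt VX|)%N.
  apply: leq_trans (card_Img VX).
  exact: fsubset_leq_card (EX_Img hsub).
have cEr : (#|` EX|%:R : R) <= #|Alt VX|%:R by rewrite ler_nat.
have h1 : (#|` EX|%:R : R) * ln d <= #|Alt VX|%:R * ln d.
  by rewrite ler_pM2r.
have L0 : ln d != 0 by rewrite gt_eqF.
have eR : (d - 1) / 2 * V * (ln V / ln d) = ((d - 1) * (V * ln V)) / (2 * ln d).
  by field.
rewrite eR.
have p2L : (0 : R) < 2 * ln d by rewrite mulr_gt0.
split.
  rewrite ler_pdivlMr //; lra.
move=> eq.
have eq' : (#|` EX|%:R : R) * (2 * ln d) = (d - 1) * (V * ln V).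
  by rewrite eq mulfVK // gt_eqF.
have eA : (#|Alt VX|%:R : R) * ln d = #|` EX|%:R * ln d by lra.
have eAn : #|Alt VX| = #|` EX|.
  by have := mulIf L0 eA => /eqP; rewrite eqr_nat => /eqP.
have cub : cube (Sfin VX) by apply: fin2; [exact: hV | lra].
have EXI : EX = Img VX.
  apply/fsetP; apply/fsubset_cardP; last exact: EX_Img.
  apply/eqP; rewrite eqn_leq fsubset_leq_card ?(EX_Img hsub) //.
  by rewrite -eAn card_Img.
case: cub => hf hfS [Cf eS].
case/imsetP: hfS => x0 _ hx0.
exists [fset val k | k in Cf]%fset, (val x0); split; last first.
  by move=> u v uV vV a; rewrite EXI; apply: adj_Img.
move=> g; split.
  move=> gV x xC.
  case: (boolP (x \in KK VX)) => xK; last by rewrite !(VX_supp _ xK) //; exact: valP.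
  have : res VX g \in Sfin VX by apply/imsetP; exists [` gV]%fset.
  rewrite eS inE => /forallP /(_ [` xK]%fset).
  have -> : [` xK]%fset \notin Cf.
    by apply: contra xC => kC; apply/imfsetP; exists [` xK]%fset.
  by rewrite hx0 !ffunE /= => /eqP.
move=> H.
have sg : suppK VX g.
  move=> x xK; rewrite H; first by apply: VX_supp xK; exact: valP.
  apply: contra xK => /imfsetP [k _ ->]; exact: valP.
have : res VX g \in Sfin VX.
  rewrite eS inE; apply/forallP => k; apply/implyP => kC.
  rewrite hx0 !ffunE H //.
  apply: contra kC => /imfsetP [k' k'C e]; by rewrite (val_inj e).
case/imsetP => y _ ey.
have -> : g = val y by apply: res_inj ey => //; apply: VX_supp; exact: valP.
exact: valP.
Qed.
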